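(* For every $m\ge1$ and every probability mass function $(g_k)_{k\in\mathbb Z}$ of a sum of $m$ independent Bernoulli random variables (extended by $0$ outside $\{0,\ldots,m\}$), $$g_{k-1}g_k^2-2g_{k-1}^2g_{k+1}+g_kg_{k+1}g_{k-2}\ge0\quad\text{for all }k\in\mathbb Z.$$ *)

(* Defs.v *)
From HB Require Import structures.
From mathcomp Require Import all_boot all_order all_algebra.
Set Implicit Arguments. Unset Strict Implicit. Unset Printing Implicit Defensive.
Import Order.TTheory GRing.Theory Num.Theory.
Local Open Scope ring_scope.

(* Probability mass function of S = X_1 + ... + X_m, X_i independent
   Bernoulli(p i), computed on the product space {0,1}^m:
   P(S = k) = sum over outcomes x with #{i | x i} = k of
              prod_i (p i if x i else 1 - p i).
   For k outside {0,...,m} the sum is empty, so the value is 0. *)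
Definition poibin_pmf (R : nzRingType) (m : nat) (p : 'I_m -> R) (k : int) : R :=
  \sum_(x : {ffun 'I_m -> bool} | (#|[set i | x i]|%:Z == k))
     \prod_(i < m) (if x i then p i else 1 - p i).

(* Main.v *)
Require Import Defs.
From HB Require Import structures.
From mathcomp Require Import all_boot all_order all_algebra.
From mathcomp Require Import zify ring lra.
Import Order.TTheory GRing.Theory Num.Theory.
Local Open Scope ring_scope.

Section A.
Variable R : realFieldType.
Implicit Types a b c d f p q : R.

Definition E3 b c d f := c * d ^+ 2 - 2%:R * c ^+ 2 * f + b * d * f.

Lemma E_step q p a b c d f : 0 <= q -> 0 <= p ->
  0 <= a -> 0 <= b -> 0 <= c -> 0 <= d -> 0 <= f ->
  0 <= E3 b c d f -> 0 <= E3 a b c d ->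
  0 <= c ^+ 2 - b * d -> 0 <= c * d - b * f -> 0 <= d ^+ 2 - c * f ->
  0 <= E3 (q * b + p * a) (q * c + p * b) (q * d + p * c) (q * f + p * d).
Proof.
move=> q0 p0 a0 b0 c0 d0 f0 E1 E0 L1 L2 L3.
set T := 2%:R * b * d ^+ 2 - 3%:R * b * c * f + a * d * f.
set T2 := c ^+ 3 - b * c * d - 2%:R * b ^+ 2 * f + a * d ^+ 2 + a * c * f.
have -> : E3 (q * b + p * a) (q * c + p * b) (q * d + p * c) (q * f + p * d)
  = q ^+ 3 * E3 b c d f + q ^+ 2 * p * T + q * p ^+ 2 * T2 + p ^+ 3 * E3 a b c d.
  by rewrite /E3 /T /T2; ring.
have T0 : 0 <= T.
  have [c0'|cn0] := eqVneq c 0.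
    have -> : T = 2%:R * b * d ^+ 2 + a * d * f by rewrite /T c0'; ring.
    apply: addr_ge0; repeat apply: mulr_ge0 => //; apply: exprn_ge0 => //.
  have cp : 0 < c by rewrite lt_def cn0 c0.
  have : 0 <= c * T.
    have -> : c * T = 2%:R * b * E3 b c d f + f * E3 a b c d by rewrite /T /E3; ring.
    apply: addr_ge0; apply: mulr_ge0 => //; apply: mulr_ge0 => //.
  by rewrite pmulr_rge0.
have T20 : 0 <= T2.
  have [c0'|cn0] := eqVneq c 0.
    have bd0 : b * d = 0.
      by apply/eqP; rewrite eq_le mulr_ge0 // andbT; move: L1; rewrite c0' expr0n /= sub0r oppr_ge0.
    have bf0 : b * f = 0.
      by apply/eqP; rewrite eq_le mulr_ge0 // andbT; move: L2; rewrite c0' mul0r sub0r oppr_ge0.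
    have -> : T2 = - 2%:R * b * (b * f) + a * d ^+ 2 by rewrite /T2 c0'; ring.
    rewrite bf0 mulr0 add0r; apply: mulr_ge0 => //; apply: exprn_ge0 => //.
  have cp : 0 < c by rewrite lt_def cn0 c0.
  have [d0'|dn0] := eqVneq d 0.
    have cf0 : c * f = 0.
      by apply/eqP; rewrite eq_le mulr_ge0 // andbT; move: L3; rewrite d0' expr0n /= sub0r oppr_ge0.
    have f0' : f = 0.
      by move/eqP: cf0; rewrite mulf_eq0 (negbTE cn0) => /eqP.
    rewrite /T2 d0' f0'; have -> : c ^+ 3 - b * c * 0 - 2%:R * b ^+ 2 * 0 + a * 0 ^+ 2 + a * c * 0 = c ^+ 3 by ring.
    apply: exprn_ge0 => //.
  have dp : 0 < d by rewrite lt_def dn0 d0.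
  have : 0 <= c ^+ 2 * d ^+ 2 * T2.
    have -> : c^+2 * d^+2 * T2
      = ((c ^+ 2 - b * d) ^+ 2 + (b * d) ^+ 2) * E3 b c d f
       + (c * d ^+ 3 + c ^+ 2 * d * f) * E3 a b c d
       + 2%:R * f * (c ^+ 2 - b * d) ^+ 3 by rewrite /T2 /E3; ring.
    apply: addr_ge0; first apply: addr_ge0.
    - apply: mulr_ge0 => //; apply: addr_ge0; apply: sqr_ge0.
    - apply: mulr_ge0 => //; apply: addr_ge0; repeat apply: mulr_ge0 => //; apply: exprn_ge0 => //.
    - apply: mulr_ge0; [apply: mulr_ge0 => //| apply: exprn_ge0 => //].
  have cd : 0 < c ^+ 2 * d ^+ 2 by apply: mulr_gt0; apply: exprn_gt0.
  by rewrite pmulr_rge0.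
apply: addr_ge0; first apply: addr_ge0; first apply: addr_ge0.
- apply: mulr_ge0 => //; apply: exprn_ge0 => //.
- apply: mulr_ge0 => //; apply: mulr_ge0 => //; apply: exprn_ge0 => //.
- apply: mulr_ge0 => //; apply: mulr_ge0 => //; apply: exprn_ge0 => //.
- apply: mulr_ge0 => //; apply: exprn_ge0 => //.
Qed.
End A.
Arguments E3 {R}.
Arguments E_step {R}.
Section B.
Variable R : realFieldType.

Definition seqP (P : {poly R}) (k : int) : R :=
  match k with Posz n => P`_n | Negz _ => 0 end.

Definition Inv (h : int -> R) :=
  [/\ (forall k : int, 0 <= h k),
      (forall (k : int) (d : nat), 0 <= h k * h (k + d%:Z) - h (k - 1) * h (k + d%:Z + 1)) &
      (forall k : int, 0 <= E3 (h (k - 2)) (h (k - 1)) (h k) (h (k + 1)))].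

Lemma L_step (q p x0 xm xmm y0 ym y1 : R) : 0 <= q -> 0 <= p ->
  0 <= x0 * y0 - xm * y1 -> 0 <= xm * ym - xmm * y0 -> 0 <= x0 * ym - xmm * y1 ->
  0 <= (q * x0 + p * xm) * (q * y0 + p * ym) - (q * xm + p * xmm) * (q * y1 + p * y0).
Proof.
move=> q0 p0 h1 h2 h3.
have -> : (q * x0 + p * xm) * (q * y0 + p * ym) - (q * xm + p * xmm) * (q * y1 + p * y0)
  = q ^+ 2 * (x0 * y0 - xm * y1) + q * p * (x0 * ym - xmm * y1) + p ^+ 2 * (xm * ym - xmm * y0)
  by ring.
apply: addr_ge0; first apply: addr_ge0; apply: mulr_ge0 => //;
  try apply: exprn_ge0 => //; apply: mulr_ge0 => //.
Qed.

Lemma le_eqr (x y : R) : 0 <= x -> x = y -> 0 <= y.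
Proof. by move=> H <-. Qed.

Ltac fixL H := apply: (le_eqr _ _ H); congr (_ * _ - _ * _); try (apply: congr1; lia).
Ltac fixE H := apply: (le_eqr _ _ H); congr (E3 _ _ _ _); try (apply: congr1; lia).

Lemma Inv_step (h : int -> R) q p : 0 <= q -> 0 <= p -> Inv h ->
  Inv (fun k => q * h k + p * h (k - 1)).
Proof.
move=> q0 p0 [h0 hL hE]; split.
- by move=> k; apply: addr_ge0; apply: mulr_ge0.
- move=> k d.
  have -> : k + d%:Z + 1 - 1 = k + d%:Z by lia.
  apply: L_step => //.
  + fixL (hL (k - 1) d).
  + case: d => [|d].
      have H := hL (k - 1) 1%N; rewrite mulrC in H.
      apply: (le_eqr _ _ H); congr (_ * _ - _ * _); try (apply: congr1; lia).
    have H := addr_ge0 (hL k d) (hL (k - 1) d.+2).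
    apply: (le_eqr _ _ H).
    have -> : k + d.+1%:Z - 1 = k + d%:Z by lia.
    have -> : k - 1 + d.+2%:Z + 1 = k + d.+1%:Z + 1 by lia.
    have -> : k - 1 + d.+2%:Z = k + d%:Z + 1 by lia.
    have -> : k + d%:Z + 1 = k + d.+1%:Z by lia.
    ring.
- move=> k.
  have e1 : k - 2 - 1 = k - 3 by lia.
  have e2 : k - 1 - 1 = k - 2 by lia.
  have e3 : k + 1 - 1 = k by lia.
  rewrite e1 e2 e3.
  apply: E_step => //.
  + fixE (hE (k - 1)).
  + rewrite expr2; fixL (hL (k - 1) 0%N).
  + fixL (hL (k - 1) 1%N).
  + rewrite expr2; fixL (hL k 0%N).
Qed.
End B.
Arguments seqP {R}.
Arguments Inv {R}.
Section C.
Variable R : realFieldType.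

Lemma seqP1 (k : int) : seqP (1 : {poly R}) k = (k == 0)%:R.
Proof. by case: k => n //=; rewrite coef1. Qed.

Lemma Inv_base : Inv (seqP (1 : {poly R})).
Proof.
have h0 k : 0 <= seqP (1 : {poly R}) k by rewrite seqP1 ler0n.
have pr0 (i j : int) : i != j -> seqP (1 : {poly R}) i * seqP 1 j = 0.
  move=> ij; rewrite !seqP1; case: (i =P 0) => [i0|]; last by rewrite mul0r.
  have -> : (j == 0) = false by apply/negP => /eqP j0; move/eqP: ij; apply; rewrite i0 j0.
  by rewrite mulr0.
split => //.
- move=> k d; rewrite (pr0 (k - 1)) ?subr0; first by apply: mulr_ge0.
  by apply/negP => /eqP; lia.
- move=> k; set b := seqP 1 (k - 2); set c := seqP 1 (k - 1); set d := seqP 1 k; set f := seqP 1 (k + 1).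
  have -> : E3 b c d f = (c * d) * d - 2%:R * c * (c * f) + b * (d * f) by rewrite /E3; ring.
  rewrite /c /d /f !pr0; try (apply/negP => /eqP; lia).
  by rewrite !(mul0r, mulr0, subr0, addr0).
Qed.

Lemma seqP_step (P : {poly R}) (a b : R) (k : int) :
  seqP (P * (a%:P + b *: 'X)) k = a * seqP P k + b * seqP P (k - 1).
Proof.
case: k => [n|n] /=.
- rewrite mulrDr coefD mulrC mul_polyC coefZ -scalerAr coefZ coefMX.
  case: n => [|n] //=.
  by rewrite subn1.
- by rewrite !mulr0 addr0.
Qed.

Lemma Inv_ext (h h' : int -> R) : (forall k, h k = h' k) -> Inv h -> Inv h'.
Proof.
move=> e [h0 hL hE]; split.
- by move=> k; rewrite -e.
- by move=> k d; rewrite -!e.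
- by move=> k; rewrite -!e.
Qed.

Lemma Inv_all (m : nat) (p : 'I_m -> R) : (forall i, 0 <= p i <= 1) ->
  Inv (seqP (\prod_(i < m) ((1 - p i)%:P + p i *: 'X))).
Proof.
elim: m p => [|m IH] p hp.
  by rewrite big_ord0; apply: Inv_base.
rewrite big_ord_recr /=.
have H := IH (fun i => p (widen_ord (leqnSn m) i)) (fun i => hp _).
have /andP [p0 p1] := hp ord_max.
apply: Inv_ext; last first.
  by apply: (@Inv_step R _ (1 - p ord_max) (p ord_max) _ _ H) => //; rewrite subr_ge0.
by move=> k /=; rewrite seqP_step.
Qed.

Lemma pmf_poly (m : nat) (p : 'I_m -> R) (k : int) :
  poibin_pmf p k = seqP (\prod_(i < m) ((1 - p i)%:P + p i *: 'X)) k.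
Proof.
pose F (i : 'I_m) (b : bool) : {poly R} := if b then p i *: 'X else (1 - p i)%:P.
have -> : \prod_(i < m) ((1 - p i)%:P + p i *: 'X) = \prod_(i < m) \sum_(b : bool) F i b.
  by apply: eq_bigr => i _; rewrite big_bool /F addrC.
rewrite bigA_distr_bigA /=.
have -> : \sum_(f : {ffun 'I_m -> bool}) \prod_(i < m) F i (f i)
  = \sum_(f : {ffun 'I_m -> bool}) ((\prod_(i < m) (if f i then p i else 1 - p i)) *: 'X^#|[set i | f i]|).
  apply: eq_bigr => f _.
  have -> : \prod_(i < m) F i (f i)
      = \prod_(i < m) ((if f i then p i else 1 - p i) *: (if f i then 'X else 1 : {poly R})).
    apply: eq_bigr => i _; rewrite /F; case: (f i) => //.
    by rewrite alg_polyC.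
  rewrite scaler_prod; congr (_ *: _).
  rewrite -big_mkcond prodr_const; congr (_ ^+ _).
  by apply: eq_card => i; rewrite inE.
rewrite /poibin_pmf; case: k => n /=.
- rewrite coef_sum big_mkcond; apply: eq_bigr => f _.
  rewrite coefZ coefXn eqz_nat eq_sym.
  by case: eqP => _; rewrite ?mulr1 ?mulr0.
- by apply: big1 => f.
Qed.

End C.

Theorem theoremA2 (R : realFieldType) (m : nat) (p : 'I_m -> R)
  (hm : (1 <= m)%N) (hp : forall i, 0 <= p i <= 1) (k : int) :
  let g := poibin_pmf p in
  0 <= g (k - 1) * g k ^+ 2 - 2%:R * g (k - 1) ^+ 2 * g (k + 1)
       + g k * g (k + 1) * g (k - 2).
Proof.
cbv zeta.
have [_ _ hE] := @Inv_all R m p hp.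
rewrite !pmf_poly.
apply: le_trans (hE k) _; rewrite le_eqVlt; apply/orP; left; apply/eqP.
rewrite /E3; ring.
Qed.
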